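(* Let $G$ be a block graph with diameter $2$. Then $G$ is $\chi_\rho$-critical if and only if $\delta(G) \geq 2$.
   Context: Graphs are finite and simple. A block of $G$ is a maximal connected subgraph without cut vertices; a block graph is a connected graph in which every block is a complete graph. $\delta(G)$ is the minimum degree. A $k$-packing coloring of $G$ is a map $c:V(G)\to\{1,\ldots,k\}$ such that two distinct vertices $u,v$ with $c(u)=c(v)=i$ satisfy $d_G(u,v)>i$ (distance between vertices in different components is infinite); $\chi_\rho(G)$ is the smallest $k$ for which such a coloring exists. $G$ is $\chi_\rho$-critical if $\chi_\rho(H)<\chi_\rho(G)$ for every proper subgraph $H$ of $G$. *)

(* Defs.v *)
(* Simple graph G = (T, e) with e symmetric, irreflexive. *)
From mathcomp Require Import all_boot.
Set Implicit Arguments. Unset Strict Implicit. Unset Printing Implicit Defensive.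

Section Graphs.
Variable T : finType.

(* A (sub)graph is given by a vertex set V and a set E of ordered pairs
   (each undirected edge uv is stored as (u,v) and (v,u)). *)

Definition edges (e : rel T) : {set T * T} := [set p | e p.1 p.2].

Definition is_subgraph (e : rel T) (V : {set T}) (E : {set T * T}) : Prop :=
  (forall p, p \in E -> [/\ p.1 \in V, p.2 \in V & e p.1 p.2]) /\
  (forall u v, ((u, v) \in E) = ((v, u) \in E)).

Definition is_proper_subgraph (e : rel T) (V : {set T}) (E : {set T * T}) : Prop :=
  is_subgraph e V E /\ (V != [set: T] \/ E != edges e).

(* ball E n u: vertices reachable from u by a walk of length <= n using E;
   so  v \notin ball E i u  <->  d(u,v) > i  (infinite distance allowed). *)
Fixpoint ball (E : {set T * T}) (n : nat) (u : T) : {set T} :=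
  if n is n'.+1 then
    ball E n' u :|: [set y | [exists x in ball E n' u, (x, y) \in E]]
  else [set u].

Definition packing_coloring (V : {set T}) (E : {set T * T}) (k : nat)
    (c : {ffun T -> 'I_k.+1}) : bool :=
  [forall v in V, 0 < c v] &&
  [forall u in V, forall v in V,
     (u != v) && (c u == c v :> nat) ==> (v \notin ball E (c u) u)].

Definition packing_colorable (V : {set T}) (E : {set T * T}) (k : nat) : bool :=
  [exists c : {ffun T -> 'I_k.+1}, @packing_coloring V E k c].

Lemma packing_colorable_exists (V : {set T}) (E : {set T * T}) :
  exists k, packing_colorable V E k.
Proof.
exists #|T|; apply/existsP.
exists [ffun v => inord (enum_rank v).+1 : 'I_#|T|.+1].
apply/andP; split.
  by apply/forallP => v; apply/implyP => _; rewrite ffunE inordK // ltnS ltn_ord.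
apply/forallP => u; apply/implyP => _; apply/forallP => v; apply/implyP => _.
apply/implyP => /andP [uv]; rewrite !ffunE !inordK ?ltnS ?ltn_ord //.
by rewrite eqSS => /eqP /val_inj /enum_rank_inj Huv; rewrite Huv eqxx in uv.
Qed.

Definition chi_rho (V : {set T}) (E : {set T * T}) : nat :=
  ex_minn (packing_colorable_exists V E).

Definition chi_rho_critical (e : rel T) : Prop :=
  forall V E, is_proper_subgraph e V E -> chi_rho V E < chi_rho [set: T] (edges e).

Definition adj (E : {set T * T}) : rel T := fun x y => (x, y) \in E.

Definition sg_connected (V : {set T}) (E : {set T * T}) : Prop :=
  V != set0 /\ forall u v, u \in V -> v \in V -> connect (adj E) u v.

Definition no_cut_vertex (V : {set T}) (E : {set T * T}) : Prop :=
  forall x, x \in V -> forall u v, u \in V :\ x -> v \in V :\ x ->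
    connect (fun a b => [&& adj E a b, a != x & b != x]) u v.

Definition is_block (e : rel T) (V : {set T}) (E : {set T * T}) : Prop :=
  [/\ is_subgraph e V E, sg_connected V E, no_cut_vertex V E &
    forall V' E', is_subgraph e V' E' -> V \subset V' -> E \subset E' ->
      sg_connected V' E' -> no_cut_vertex V' E' -> V' = V /\ E' = E].

Definition is_complete (V : {set T}) (E : {set T * T}) : Prop :=
  forall u v, u \in V -> v \in V -> u != v -> (u, v) \in E.

Definition block_graph (e : rel T) : Prop :=
  sg_connected [set: T] (edges e) /\
  forall V E, is_block e V E -> is_complete V E.

Definition diameter2 (e : rel T) : Prop :=
  (forall u v, v \in ball (edges e) 2 u) /\
  exists u v, v \notin ball (edges e) 1 u.

Definition deg (e : rel T) (x : T) : nat := #|[set y | e x y]|.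

End Graphs.

(* Main.v *)
Require Import Defs.
From mathcomp Require Import all_boot zify.
From Stdlib Require Import Classical.
Set Implicit Arguments. Unset Strict Implicit. Unset Printing Implicit Defensive.


Section Gen.
Variable T : finType.
Implicit Types (E : {set T * T}) (V S : {set T}).

Lemma ball1P E u v : reflect (v = u \/ (u, v) \in E) (v \in ball E 1 u).
Proof.
rewrite /= !inE; apply: (iffP orP) => [[/eqP->|/existsP[x /andP[]]]|[->|H]].
- by left.
- by rewrite inE => /eqP ->; right.
- by left.
- by right; apply/existsP; exists u; rewrite inE eqxx.
Qed.

Lemma ball2P E u v : reflect
  (v = u \/ (u, v) \in E \/ exists y, (u, y) \in E /\ (y, v) \in E)
  (v \in ball E 2 u).
Proof.
rewrite [ball E 2 u]/= inE; apply: (iffP orP).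
- case=> [/ball1P[->|H]|]; [by left|by right; left|].
  rewrite inE => /existsP[x /andP[/ball1P[->|Hx] Hxv]]; first by right; left.
  by right; right; exists x.
- case=> [->|[H|[y [H1 H2]]]].
  + by left; apply/ball1P; left.
  + by left; apply/ball1P; right.
  + by right; rewrite inE; apply/existsP; exists y; rewrite H2 andbT; apply/ball1P; right.
Qed.

Lemma ball_mono E u n m : n <= m -> ball E n u \subset ball E m u.
Proof.
elim: m => [|m IH]; first by rewrite leqn0 => /eqP ->.
rewrite leq_eqVlt => /orP[/eqP->//|]; rewrite ltnS => /IH H.
apply: subset_trans H _; rewrite /=; exact: subsetUl.
Qed.

Definition Eindep E S := forall y z, y \in S -> z \in S -> y != z -> (y, z) \notin E.
Definition far2 E S := forall y z, y \in S -> z \in S -> y != z -> z \notin ball E 2 y.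

Lemma chi_le V E k : packing_colorable V E k -> chi_rho V E <= k.
Proof. by rewrite /chi_rho; case: ex_minnP => m _ /(_ k). Qed.

Lemma chi_col V E : exists col, @packing_coloring T V E (chi_rho V E) col.
Proof. by rewrite /chi_rho; case: ex_minnP => m /existsP[c Hc] _; exists c. Qed.

Lemma UB V E S1 S2 : Eindep E S1 -> far2 E S2 -> [disjoint S1 & S2] ->
  chi_rho V E <= (S2 != set0) + 1 + #|V :\: (S1 :|: S2)|.
Proof.
move=> HI HF Hd; apply: chi_le.
set R := V :\: (S1 :|: S2); set k := _ + _ + _.
pose f y : nat := if y \in S1 then 1 else if y \in S2 then 2
  else (S2 != set0) + 2 + index y (enum R).
have fR y : y \in V -> y \notin S1 -> y \notin S2 -> f y = (S2 != set0) + 2 + index y (enum R).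
  by rewrite /f => _ /negbTE-> /negbTE->.
have fk y : y \in V -> f y <= k.
  move=> yV; rewrite /f /k; case: ifP => [_|y1]; first by lia.
  case: ifP => [y2|y2].
    have -> : (S2 != set0) by apply/set0Pn; exists y.
    by lia.
  have : y \in R by rewrite !inE y1 y2 yV.
  rewrite -mem_enum -index_mem -cardE => H; lia.
apply/existsP; exists [ffun y => inord (f y) : 'I_k.+1].
apply/andP; split.
  apply/forallP => v; apply/implyP => vV; rewrite ffunE inordK ?ltnS ?fk //.
  rewrite /f; case: ifP => // _; case: ifP => // _; lia.
apply/forallP => u; apply/implyP => uV; apply/forallP => v; apply/implyP => vV.
apply/implyP => /andP[uv]; rewrite !ffunE !inordK ?ltnS ?fk //.
case: (boolP (u \in S1)) => u1.
  have -> : f u = 1 by rewrite /f u1.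
  case: (boolP (v \in S1)) => v1.
    move=> _; apply/ball1P => -[Hvu|]; first by rewrite Hvu eqxx in uv.
    by apply/negP; apply: HI.
  case: (boolP (v \in S2)) => v2; first by rewrite /f (negbTE v1) v2.
  rewrite fR // => /eqP; lia.
case: (boolP (u \in S2)) => u2.
  have -> : f u = 2 by rewrite /f (negbTE u1) u2.
  case: (boolP (v \in S1)) => v1; first by rewrite /f v1.
  case: (boolP (v \in S2)) => v2; first by move=> _; apply: HF.
  have H2 : (S2 != set0) by apply/set0Pn; exists u.
  by rewrite fR // H2 /= => /eqP; lia.
rewrite fR //.
case: (boolP (v \in S1)) => v1; first by rewrite /f v1 /= => /eqP; lia.
case: (boolP (v \in S2)) => v2.
  have H2 : S2 != set0 by apply/set0Pn; exists v.
  by rewrite /f (negbTE v1) v2 H2 /= => /eqP; lia.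
rewrite fR // => /eqP Hi; have {}Hi : index u (enum R) = index v (enum R) by lia.
have uR : u \in R by rewrite !inE (negbTE u1) (negbTE u2) uV.
have vR : v \in R by rewrite !inE (negbTE v1) (negbTE v2) vV.
have uE : u \in enum R by rewrite mem_enum.
have vE : v \in enum R by rewrite mem_enum.
have : u = v by rewrite -(nth_index u uE) Hi nth_index.
by move=> Huv; rewrite Huv eqxx in uv.
Qed.

End Gen.


Section Gen2.
Variable T : finType.
Implicit Types (E : {set T * T}) (V S : {set T}).

Definition C1 V k (col : {ffun T -> 'I_k.+1}) := [set y in V | col y == 1 :> nat].

Lemma pc_elim V E k (col : {ffun T -> 'I_k.+1}) : packing_coloring V E col ->
  (forall v, v \in V -> 0 < col v) /\
  (forall u v, u \in V -> v \in V -> u != v -> col u = col v :> nat -> v \notin ball E (col u) u).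
Proof.
case/andP=> /forallP H1 /forallP H2; split.
  by move=> v vV; move/implyP: (H1 v); apply.
move=> u v uV vV uv Hc; move/implyP: (H2 u) => /(_ uV) /forallP /(_ v) /implyP /(_ vV) /implyP.
by apply; rewrite uv Hc eqxx.
Qed.

Lemma C1_indep V E k (col : {ffun T -> 'I_k.+1}) : packing_coloring V E col ->
  Eindep E (C1 V col).
Proof.
case/pc_elim=> _ H y z; rewrite !inE => /andP[yV /eqP y1] /andP[zV /eqP z1] yz.
have := H y z yV zV yz; rewrite y1 z1 => /(_ erefl) Hb.
by apply/negP => Hyz; move/negP: Hb; apply; apply/ball1P; right.
Qed.

Lemma LB V E k (col : {ffun T -> 'I_k.+1}) : V != set0 ->
  (forall u v, u \in V -> v \in V -> v \in ball E 2 u) ->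
  packing_coloring V E col -> #|V| + 1 <= k + #|C1 V col|.
Proof.
move=> /set0Pn[y0 y0V] Hd Hc; have [Hpos Hp] := pc_elim Hc.
have k1 : 0 < k by have := Hpos _ y0V; have := ltn_ord (col y0); lia.
pose one : 'I_k.+1 := inord 1.
have oneE : one = 1 :> nat by rewrite inordK.
have inj : {in V :\: C1 V col &, injective col}.
  move=> u v; rewrite !inE => /andP[u1 uV] /andP[v1 vV] Huv.
  apply/eqP; apply/negPn/negP => uv.
  have := Hp u v uV vV uv (congr1 val Huv).
  have Hu := Hpos u uV; rewrite uV /= in u1.
  have H2 : 2 <= col u by move: u1 Hu; case: (nat_of_ord (col u)) => // -[].
  by move/negP; apply; apply: (subsetP (ball_mono _ _ H2)); apply: Hd.
have sub : [set col x | x in V :\: C1 V col] \subset ~: [set ord0; one].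
  apply/subsetP => i /imsetP[x]; rewrite !inE => /andP[x1 xV] ->.
  rewrite xV /= in x1; have := Hpos x xV.
  move=> Hx0; rewrite negb_or; apply/andP; split; apply/eqP => Hx.
    by rewrite Hx in Hx0.
  by move: x1; rewrite Hx oneE.
have := subset_leq_card sub; rewrite card_in_imset //.
have := cardsC [set ord0; one]; rewrite cards2 card_ord.
have -> : (ord0 != one) by apply/negP => /eqP/(congr1 val) /=; rewrite oneE.
have := cardsID (C1 V col) V; have : C1 V col \subset V by apply/subsetP => x; rewrite inE => /andP[].
move/setIidPr; rewrite setIC => ->; lia.
Qed.

End Gen2.


Section Blk.
Variable T : finType.
Variable e : rel T.
Hypothesis esym : symmetric e.
Hypothesis eirr : irreflexive e.
Hypothesis hblock : block_graph e.
Implicit Types (E : {set T * T}) (V S : {set T}).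

Definition Pgood V E := [/\ is_subgraph e V E, sg_connected V E & no_cut_vertex V E].

Lemma exists_block_aux n V E : #|[set: T]| + #|[set: T * T]| - (#|V| + #|E|) < n ->
  Pgood V E -> exists V' E', [/\ is_block e V' E', V \subset V' & E \subset E'].
Proof.
elim: n V E => [//|n IH] V E Hn HP.
case: (classic (exists V' E', [/\ Pgood V' E', V \subset V', E \subset E' & (V' != V) || (E' != E)])).
  case=> V' [E' [HP' sV sE Hne]].
  have Hlt : #|V| + #|E| < #|V'| + #|E'|.
    case/orP: Hne => Hne.
      have : V \proper V' by rewrite properEneq eq_sym Hne.
      by rewrite properEcard => /andP[_ H]; have := subset_leq_card sE; lia.
    have : E \proper E' by rewrite properEneq eq_sym Hne.
    by rewrite properEcard => /andP[_ H]; have := subset_leq_card sV; lia.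
  have HV' : #|V'| <= #|[set: T]| by apply: subset_leq_card; apply: subsetT.
  have HE' : #|E'| <= #|[set: T * T]| by apply: subset_leq_card; apply: subsetT.
  have [V'' [E'' [HB s1 s2]]] := IH V' E' ltac:(lia) HP'.
  by exists V'', E''; split => //; apply: subset_trans s1 || apply: subset_trans s2.
move=> Hno; exists V, E; split => //; case: HP => H1 H2 H3; split => //.
move=> V' E' S1 sV sE C1 N1.
case: (boolP ((V' == V) && (E' == E))) => [/andP[/eqP-> /eqP->]//|Hne].
exfalso; apply: Hno; exists V', E'; split => //; by rewrite -negb_and.
Qed.

Lemma exists_block V E : Pgood V E ->
  exists V' E', [/\ is_block e V' E', V \subset V' & E \subset E'].
Proof. exact: (exists_block_aux (ltnSn _)). Qed.

Lemma path_sym_connect (R : rel T) x q u v : symmetric R -> path R x q ->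
  u \in x :: q -> v \in x :: q -> connect R u v.
Proof.
move=> Rs Hp Hu Hv; have Cs := sym_connect_sym Rs.
apply: (connect_trans (y := x)); last exact: path_connect Hp _ Hv.
by rewrite Cs; apply: path_connect Hp _ Hu.
Qed.

Lemma cycle_path1 (R : rel T) x0 s' : cycle R (x0 :: s') -> path R x0 s'.
Proof. by rewrite /= rcons_path => /andP[]. Qed.

Lemma cycle_clique s : uniq s -> 2 < size s -> cycle e s ->
  forall x y, x \in s -> y \in s -> x != y -> e x y.
Proof.
move=> Us Ss Cs.
pose V := [set x in s].
pose E := [set p | [&& p.1 \in s, p.2 \in s & (next s p.1 == p.2) || (next s p.2 == p.1)]].
have Esym a b : ((a, b) \in E) = ((b, a) \in E).
  by rewrite !inE /=; case: (a \in s); case: (b \in s) => //=; rewrite orbC.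
have Hsub : is_subgraph e V E.
  split => // -[a b]; rewrite !inE /= => /and3P[ha hb Hab]; split; rewrite ?inE //.
  case/orP: Hab => /eqP<-; first exact: next_cycle.
  by rewrite esym; apply: next_cycle.
have Fc := cycle_next Us.
have Hnext a b : a \in s -> next s a = b -> (a, b) \in E.
  by move=> ha Hab; rewrite inE /= ha -Hab mem_next ha eqxx.
have HG : Pgood V E.
  split => //.
    have [x0 [s' Hs]] : exists x0 s', s = x0 :: s' by case: (s) Ss => // x0 s' _; exists x0, s'.
    split.
      by apply/set0Pn; exists x0; rewrite inE Hs mem_head.
    move=> u v; rewrite !inE Hs => hu hv.
    apply: (path_sym_connect (x := x0) (q := s')) hu hv.
      by move=> a b; rewrite /adj Esym.
    have Hp := cycle_path1 (R := frel (next s)) (x0 := x0) (s' := s').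
    rewrite -Hs in Hp; have {}Hp := Hp Fc.
    apply: (sub_in_path (P := mem (x0 :: s'))) Hp; last by apply/allP.
    by move=> a b ha hb /eqP Hab; apply: Hnext; rewrite // Hs.
  move=> z; rewrite inE => hz u v; rewrite !inE => /andP[uz hu] /andP[vz hv].
  have [q Hq] : exists q, rot (index z s).+1 s = rcons q z.
    rewrite /rot (take_nth z); last by rewrite index_mem.
    by rewrite nth_index // -rcons_cat; eexists.
  have Ur : uniq (rcons q z) by rewrite -Hq rot_uniq.
  have Cr : fcycle (next s) (rcons q z) by rewrite -Hq rot_cycle.
  have Mr a : (a \in s) = (a \in rcons q z) by rewrite -Hq mem_rot.
  move: Ur; rewrite rcons_uniq => /andP[zq Uq].
  have hu' : u \in q by move: hu; rewrite Mr mem_rcons inE (negbTE uz).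
  have hv' : v \in q by move: hv; rewrite Mr mem_rcons inE (negbTE vz).
  case: q Hq zq Uq Cr Mr hu' hv' => // x0 q' Hq zq Uq Cr Mr hu' hv'.
  apply: (path_sym_connect (x := x0) (q := q')) hu' hv'.
    by move=> a b; rewrite /adj Esym; case: (a != z); case: (b != z); rewrite ?andbF ?andbT.
  move: Cr; rewrite /= rcons_path rcons_path => /andP[/andP[Hp _] _].
  apply: (sub_in_path (P := [pred a | (a \in x0 :: q') && (a != z)])) Hp; last first.
    by apply/allP => a ha; rewrite /= ha; apply/eqP => Haz; rewrite -Haz ha in zq.
  move=> a b /andP[ha az] /andP[hb bz] /eqP Hab; apply/and3P; split => //.
  by apply: Hnext => //; rewrite Mr mem_rcons inE ha orbT.
have [V' [E' [HB sV sE]]] := exists_block HG.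
move=> x y hx hy xy.
have Hc := hblock.2 V' E' HB.
have HxyE : (x, y) \in E'.
  by apply: Hc xy; apply: (subsetP sV); rewrite inE.
by case: HB => [[H1 _] _ _ _]; case: (H1 _ HxyE).
Qed.

End Blk.


Section Struct.
Variable T : finType.
Variable e : rel T.
Hypothesis esym : symmetric e.
Hypothesis eirr : irreflexive e.
Hypothesis hblock : block_graph e.
Hypothesis hdiam : diameter2 e.

Ltac neq := apply/eqP => Heq; subst; solve [ by rewrite ?eirr in * |
  match goal with
  | H : is_true (e ?a ?b), H' : is_true (~~ e ?a ?b) |- _ => by rewrite H in H'
  | H : is_true (e ?a ?b), H' : is_true (~~ e ?b ?a) |- _ => by rewrite esym H in H'
  | H : is_true (?a != ?a) |- _ => by rewrite eqxx in H
  end ].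
Ltac uniq_tac := rewrite /= !inE ?negb_or ?andbT; repeat (apply/andP; split); try neq.
Ltac cyc_tac := rewrite /=; repeat (apply/andP; split); try done; try (by rewrite esym).

Lemma cn u v : u != v -> ~~ e u v -> exists w, e u w /\ e w v.
Proof.
move=> uv nuv; have := hdiam.1 u v; move/ball2P.
case=> [Hvu|[H|[w [H1 H2]]]].
- by move: uv; rewrite Hvu eqxx.
- by rewrite inE /= in H; rewrite H in nuv.
- by rewrite !inE /= in H1 H2; exists w.
Qed.

Lemma c4 a b x y : a != b -> ~~ e a b -> e a x -> e x b -> e a y -> e y b -> x = y.
Proof.
move=> ab nab ax xb ay yb; apply/eqP/negPn/negP => xy.
have := @cycle_clique T e esym hblock [:: a; x; b; y].
move=> /(_ ltac:(uniq_tac) erefl ltac:(cyc_tac) a b).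
by rewrite !inE !eqxx !orbT => /(_ erefl erefl ab) H; rewrite H in nab.
Qed.

Lemma c5 a b c d f : uniq [:: a; b; c; d; f] -> e a b -> e b c -> e c d -> e d f -> e f a ->
  e a c /\ e b d.
Proof.
move=> U ab bc cd df fa.
have := @cycle_clique T e esym hblock [:: a; b; c; d; f] U erefl ltac:(cyc_tac).
move: U; rewrite /= !inE !negb_or => /andP[/andP[_ /andP[ac _]] /andP[/andP[_ /andP[bd _]] _]] H.
by split; apply: H; rewrite ?inE ?eqxx ?orbT.
Qed.


Lemma sub1 a b c x : a != b -> ~~ e a b -> e a c -> e c b -> x != c -> ~~ e c x -> e x a -> False.
Proof.
move=> ab nab ac cb xc ncx xa.
case: (boolP (e x b)) => xb.
  have ax : e a x by rewrite esym.
  by have := c4 ab nab ac cb ax xb => Hcx; move: xc; rewrite Hcx eqxx.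
have xb' : x != b by neq.
have [z [xz zb]] := cn xb' xb.
have U : uniq [:: x; a; c; b; z] by uniq_tac.
have [_ H] := c5 U xa ac cb ltac:(by rewrite esym) ltac:(by rewrite esym).
by rewrite H in nab.
Qed.

Lemma sub2 a b c x y p q : a != b -> ~~ e a b -> e a c -> e c b -> x != c -> ~~ e c x ->
  ~~ e x a -> ~~ e x b -> e x p -> e p a -> e x q -> e q b -> e x y -> e y c -> e y a -> False.
Proof.
move=> ab nab ac cb xc ncx nxa nxb xp pa xq qb xy yc ya.
have xa : x != a by neq.
have Hpy := c4 xa nxa xp pa xy ya; subst p.
case: (boolP (e y b)) => yb.
  have ay : e a y by rewrite esym.
  have Hcy := c4 ab nab ac cb ay yb; subst y.
  by rewrite esym xy in ncx.
have U : uniq [:: y; x; q; b; c] by uniq_tac.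
have [_ H] := c5 U ltac:(by rewrite esym) xq qb ltac:(by rewrite esym) ltac:(by rewrite esym).
by rewrite H in nxb.
Qed.

Lemma univ : exists c, forall x, x != c -> e c x.
Proof.
have [a [b /ball1P Hab]] := hdiam.2.
have ab : a != b by apply/eqP => Hab'; apply: Hab; left.
have nab : ~~ e a b by apply/negP => H; apply: Hab; right; rewrite inE.
have [c [ac cb]] := cn ab nab.
exists c => x xc; apply/negPn/negP => ncx.
have ba : b != a by rewrite eq_sym.
have bc : e b c by rewrite esym.
have ca : e c a by rewrite esym.
have nba : ~~ e b a by rewrite esym.
case: (boolP (e x a)) => xa; first exact: (sub1 ab nab ac cb xc ncx xa).
case: (boolP (e x b)) => xb.
  exact: (sub1 ba nba bc ca xc ncx xb).
have xa' : x != a by neq.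
have xb' : x != b by neq.
have [p [xp pa]] := cn xa' xa.
have [q [xq qb]] := cn xb' xb.
have [y [xy yc]] := cn xc ltac:(by rewrite esym).
case: (boolP (e y a)) => ya; first exact: (sub2 ab nab ac cb xc ncx xa xb xp pa xq qb xy yc ya).
case: (boolP (e y b)) => yb.
  exact: (sub2 ba nba bc ca xc ncx xb xa xq qb xp pa xy yc yb).
have U : uniq [:: a; c; y; x; p] by uniq_tac.
have [_ H] := c5 U ac ltac:(by rewrite esym) ltac:(by rewrite esym) xp pa.
by rewrite H in ncx.
Qed.

Lemma etrans2 c : (forall x, x != c -> e c x) -> forall x y z,
  y != c -> e x y -> e y z -> x != z -> e x z.
Proof.
move=> Hc x y z yc xy yz xz; apply/negPn/negP => nxz.
have xc : x != c by apply/eqP => Hxc; subst x; move: nxz; rewrite Hc // eq_sym.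
have zc : z != c by apply/eqP => Hzc; subst z; move: nxz; rewrite esym Hc.
have xc' : e x c by rewrite esym Hc.
have := c4 xz nxz xy yz xc' (Hc z zc) => Hyc.
by move: yc; rewrite Hyc eqxx.
Qed.

End Struct.


Section Main.
Variable T : finType.
Variable e : rel T.
Hypothesis esym : symmetric e.
Hypothesis eirr : irreflexive e.
Hypothesis hdiam : diameter2 e.

Definition indepb (S : {set T}) := [forall y in S, forall z in S, ~~ e y z].

Lemma indepP (S : {set T}) : reflect (forall y z, y \in S -> z \in S -> ~~ e y z) (indepb S).
Proof.
apply: (iffP forallP) => [H y z yS zS|H y].
  by move/implyP: (H y) => /(_ yS) /forallP /(_ z) /implyP; apply.
by apply/implyP => yS; apply/forallP => z; apply/implyP => zS; apply: H.
Qed.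

Lemma maxI : exists I, indepb I /\ forall S, indepb S -> #|S| <= #|I|.
Proof.
have H0 : indepb set0 by apply/indepP => y z; rewrite inE.
case: (arg_maxnP (fun S : {set T} => #|S|) H0) => I HI Hmax.
by exists I; split.
Qed.

Lemma indep_E (E : {set T * T}) (S : {set T}) : (forall p, p \in E -> e p.1 p.2) -> indepb S -> Eindep E S.
Proof.
move=> HE /indepP HS y z yS zS _; apply/negP => /HE /=.
by apply/negP; apply: HS.
Qed.

Lemma Eindep_indep (S : {set T}) : Eindep (edges e) S -> indepb S.
Proof.
move=> H; apply/indepP => y z yS zS.
case: (eqVneq y z) => [->|yz]; first by rewrite eirr.
by have := H y z yS zS yz; rewrite inE.
Qed.

Lemma cardTD (S : {set T}) : #|[set: T] :\: S| = #|T| - #|S|.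
Proof. by rewrite setTD; have := cardsC S; lia. Qed.

Lemma nonempty : [set: T] != set0.
Proof. by case: hdiam => _ [a _]; apply/set0Pn; exists a. Qed.

Lemma G_LB (I : {set T}) : (forall S, indepb S -> #|S| <= #|I|) ->
  #|T| + 1 <= chi_rho [set: T] (edges e) + #|I|.
Proof.
move=> HI; have [col Hc] := chi_col [set: T] (edges e).
have := LB nonempty (fun u v _ _ => hdiam.1 u v) Hc.
rewrite cardsT => H; have := HI _ (Eindep_indep (C1_indep Hc)); lia.
Qed.

Lemma G_UB (I : {set T}) : indepb I -> chi_rho [set: T] (edges e) <= 1 + (#|T| - #|I|).
Proof.
move=> HI.
have HE : forall p, p \in edges e -> e p.1 p.2 by move=> p; rewrite inE.
have := @UB T [set: T] (edges e) I set0 (indep_E HE HI).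
rewrite setU0 eqxx cardTD /=; apply.
- by move=> y z; rewrite inE.
- by rewrite -setI_eq0 setI0.
Qed.


Lemma dir1 : chi_rho_critical e -> forall x, 2 <= deg e x.
Proof.
move=> Hcrit x; rewrite leqNgt; apply/negP => Hdx.
have [a [b /ball1P Hab]] := hdiam.2.
have ab : a != b by apply/eqP => H; apply: Hab; left.
have nab : ~~ e a b by apply/negP => H; apply: Hab; right; rewrite inE.
have [c xc] : exists c, e x c.
  pose y := if a == x then b else a.
  have yx : y != x.
    rewrite /y; case: (eqVneq a x) => [<-|//]; by rewrite eq_sym.
  move: (hdiam.1 x y) => /ball2P [H|[H|[w [H1 _]]]].
  - by move: yx; rewrite H eqxx.
  - by exists y; rewrite inE in H.
  - by exists w; rewrite inE in H1.
have uniqc : forall z, e x z -> z = c.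
  move: Hdx; rewrite /deg ltnS => /card_le1P H z xz.
  have := H c; rewrite inE => /(_ xc) /(_ z); rewrite !inE xz.
  by move=> Hz; apply/eqP; rewrite -Hz.
have cx : c != x by apply/eqP => H; subst; rewrite eirr in xc.
have univc : forall y, y != x -> y != c -> e c y.
  move=> y yx yc; move: (hdiam.1 x y) => /ball2P [H|[H|[w [H1 H2]]]].
  - by move: yx; rewrite H eqxx.
  - by rewrite inE /= in H; move: yc; rewrite (uniqc _ H) eqxx.
  - by rewrite !inE /= in H1 H2; rewrite -(uniqc _ H1).
pose V := [set: T] :\ x.
pose E := [set p in edges e | (p.1 != x) && (p.2 != x)].
have HE : forall p, p \in E -> e p.1 p.2 by move=> p; rewrite !inE => /andP[].
have Hprop : is_proper_subgraph e V E.
  split; [split|left].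
  - by move=> p; rewrite !inE => /andP[H /andP[h1 h2]]; rewrite h1 h2.
  - by move=> u v; rewrite !inE /= esym [(u != x) && _]andbC.
  - apply/eqP => H; have : x \in V by rewrite H inE.
    by rewrite !inE eqxx.
have Hlt := Hcrit V E Hprop.
have [I [HI Hmax]] := maxI.
have GUB := G_UB HI.
have IT : #|I| <= #|T| by apply: max_card.
have I2 : 2 <= #|I|.
  have := Hmax [set a; b]; rewrite cards2 ab; apply.
  apply/indepP => y z; rewrite !inE => /orP[] /eqP-> /orP[] /eqP->; rewrite ?eirr //.
  by rewrite esym.
have [col Hc] := chi_col V E.
have Vn : V != set0 by apply/set0Pn; exists c; rewrite !inE cx.
have Ec y : y != x -> y != c -> (c, y) \in E /\ (y, c) \in E.
  by move=> yx yc; rewrite !inE /= univc // esym univc // cx yx.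
have Hd : forall u v, u \in V -> v \in V -> v \in ball E 2 u.
  move=> u v uV vV; have ux : u != x by move: uV; rewrite !inE andbT.
  have vx : v != x by move: vV; rewrite !inE andbT.
  apply/ball2P; case: (eqVneq v u) => [->|vu]; first by left.
  case: (eqVneq u c) => [Huc|uc].
    by right; left; rewrite Huc; apply: (Ec v vx _).1; rewrite -Huc.
  case: (eqVneq v c) => [->|vc]; first by right; left; exact: (Ec u ux uc).2.
  right; right; exists c; split; [exact: (Ec u ux uc).2 | exact: (Ec v vx vc).1].
have LBH := LB Vn Hd Hc.
have cardV : #|V| + 1 = #|T|.
  by have := cardsD1 x [set: T]; rewrite inE cardsT /= => ->; rewrite addnC.
have HC1 := C1_indep Hc.
have C1V : forall z, z \in C1 V col -> z != x by move=> z; rewrite !inE => /andP[/andP[]].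
case: (boolP (c \in C1 V col)) => cC.
  have : #|C1 V col| <= 1.
    rewrite -(cards1 c); apply: subset_leq_card; apply/subsetP => z zC; rewrite inE.
    apply/negPn/negP => zc.
    have := HC1 c z cC zC; rewrite eq_sym => /(_ zc).
    by rewrite (Ec z (C1V z zC) zc).1.
  lia.
have HS : indepb (x |: C1 V col).
  apply/indepP => y z; rewrite !in_setU1.
  have Hx w : w \in C1 V col -> ~~ e x w.
    move=> wC; apply/negP => /uniqc Hw; subst w; by rewrite wC in cC.
  move=> /orP[/eqP->|yC] /orP[/eqP->|zC]; rewrite ?eirr ?Hx //; first by rewrite esym Hx.
  case: (eqVneq y z) => [->|yz]; first by rewrite eirr.
  have := HC1 y z yC zC yz; apply: contra => Hyz.
  by rewrite !inE /= Hyz (C1V y yC) (C1V z zC).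
have := Hmax _ HS; rewrite cardsU1.
have -> : x \notin C1 V col by apply/negP => /C1V; rewrite eqxx.
lia.
Qed.

End Main.


Section Dir2.
Variable T : finType.
Variable e : rel T.
Hypothesis esym : symmetric e.
Hypothesis eirr : irreflexive e.
Hypothesis hblock : block_graph e.
Hypothesis hdiam : diameter2 e.

Lemma card_swap (A K B : {set T}) m : B \subset K -> #|A :&: K| <= m ->
  #|A| + #|B| <= #|(A :\: K) :|: B| + m.
Proof.
move=> BK AK; rewrite cardsU cardsD.
have -> : (A :\: K) :&: B = set0.
  apply/setP => y; rewrite !inE; apply/negP => /andP[/andP[yK _] yB].
  by rewrite (subsetP BK _ yB) in yK.
rewrite cards0; have := subset_leq_card (subsetIl A K); lia.
Qed.

Lemma clique_indep (S K : {set T}) : indepb e S ->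
  (forall y z, y \in K -> z \in K -> y != z -> e y z) -> #|S :&: K| <= 1.
Proof.
move=> /indepP HS HK; rewrite leqNgt; apply/negP => /card_gt1P[y [z [yS zS yz]]].
move: yS zS; rewrite !inE => /andP[yS yK] /andP[zS zK].
by have := HS y z yS zS; rewrite HK.
Qed.

Lemma arith1 (chi I S n : nat) : I + 2 <= S + 1 -> S <= n -> chi <= 0 + 1 + (n - S) -> chi + I <= n.
Proof. lia. Qed.

Lemma arith2 (chi I S n : nat) : I + 2 <= S + 2 -> S + 2 <= n -> chi <= true + 1 + (n - (S + 2)) -> chi + I <= n.
Proof. simpl; lia. Qed.

Lemma dir2 : (forall x, 2 <= deg e x) -> chi_rho_critical e.
Proof.
move=> hdeg V E [[Hs1 Hs2] Hne].
have [c Hc] := univ esym hblock hdiam.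
have tr := etrans2 esym hblock Hc.
have HE p : p \in E -> e p.1 p.2 by case/Hs1.
have nE y z : ~~ e y z -> (y, z) \notin E by move=> H; apply/negP => /HE /= Hyz; rewrite Hyz in H.
have [I [HI Hmax]] := maxI e.
have GLB := G_LB eirr hdiam Hmax.
suff : chi_rho V E + #|I| <= #|T| by lia.
have nb y : exists w, e y w && (w != c).
  have := hdeg y; rewrite /deg => /card_gt1P[w1 [w2 [h1 h2 w12]]].
  rewrite !inE in h1 h2.
  case: (eqVneq w1 c) => [Hw1|w1c]; last by exists w1; rewrite h1.
  by exists w2; rewrite h2 -Hw1 eq_sym.
pose N u := [set y | (y == u) || e u y].
have Ncl u : u != c -> forall y z, y \in N u -> z \in N u -> y != z -> e y z.
  move=> uc y z; rewrite !inE => /orP[/eqP->|uy] /orP[/eqP->|uz] yz.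
  - by rewrite eqxx in yz.
  - exact: uz.
  - by rewrite esym.
  case: (eqVneq y c) => [Hyc|yc]; first by rewrite Hyc in yz *; apply: Hc; rewrite eq_sym.
  case: (eqVneq z c) => [Hzc|zc]; first by rewrite Hzc in yz *; rewrite esym; apply: Hc.
  by apply: (tr y u z uc) => //; rewrite esym.
have IT : #|I| <= #|T| by apply: max_card.
case: (eqVneq V [set: T]) => [VT|VT]; last first.
  have [v vV] : exists v, v \notin V.
    case: (boolP [exists v, v \notin V]) => [/existsP//|/existsPn H].
    have HV : V = [set: T] by apply/setP => y; rewrite inE; apply/negbNE.
    by rewrite HV eqxx in VT.
  have [w /andP[vw wc]] := nb v.
  have Hw y : e w y -> y != v -> e v y.
    move=> wy yv; case: (eqVneq v c) => [vc|vc].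
      by rewrite vc; apply: Hc; rewrite -vc.
    case: (eqVneq y c) => [->|yc]; first by rewrite esym; apply: Hc.
    by apply: (tr v w y wc vw wy); rewrite eq_sym.
  pose S := if v \in I then w |: (I :\ v) else I.
  have [HS vS IS] : [/\ indepb e S, v \notin S & #|I| <= #|S|].
    rewrite /S; case: ifP => vI; last by rewrite vI.
    have wI : w \notin I by apply/negP => wI; move/indepP: HI => /(_ v w vI wI); rewrite vw.
    split.
    - apply/indepP => y z; rewrite !in_setU1 !in_setD1.
      have Hy y' : y' != v -> y' \in I -> ~~ e w y'.
        move=> y'v y'I; apply: contra (indepP _ _ HI v y' vI y'I) => /Hw; apply.
        exact: y'v.
      move=> /orP[/eqP->|/andP[yv yI]] /orP[/eqP->|/andP[zv zI]].
      + by rewrite eirr.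
      + exact: Hy.
      + by rewrite esym; apply: Hy.
      + by apply: (indepP _ _ HI).
    - rewrite !in_setU1 !in_setD1 eqxx /= orbF; apply/eqP => Hvw.
      by rewrite Hvw eirr in vw.
    - by rewrite cardsU1 !in_setD1 (negbTE wI) andbF (cardsD1 v I) vI.
  have F2 : far2 E (set0 : {set T}) by move=> y z; rewrite inE.
  have D0 : [disjoint S & (set0 : {set T})] by rewrite -setI_eq0 setI0.
  have := UB V (indep_E HE HS) F2 D0.
  rewrite eqxx setU0 /= => Hub.
  have : #|V :\: S| <= #|~: (v |: S)|.
    apply: subset_leq_card; apply/subsetP => y; rewrite !inE negb_or => /andP[yS yV].
    rewrite yS andbT; apply/eqP => Hyv; by rewrite -Hyv yV in vV.
  have := cardsC (v |: S); rewrite cardsU1 vS /=; lia.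
have EE : E != edges e by case: Hne => //; rewrite VT eqxx.
have [[u v]] : exists p, p \in edges e :\: E.
  apply/set0Pn; apply: contra EE; rewrite setD_eq0 => H.
  rewrite eqEsubset H andbT; apply/subsetP => p /HE; by rewrite inE.
rewrite !inE /= => /andP[nuvE euv].
have nvuE : (v, u) \notin E by rewrite -Hs2.
have uv : u != v by apply/eqP => Huv; rewrite Huv eirr in euv.
(* the case where the removed edge contains c *)
have b2 : forall v0, v0 != c -> (c, v0) \notin E -> (v0, c) \notin E ->
    chi_rho V E + #|I| <= #|T|.
  move=> v0 v0c ncv nvc.
  have [a [b /ball1P Hab]] := hdiam.2.
  have ab : a != b by apply/eqP => H; apply: Hab; left.
  have nab : ~~ e a b by apply/negP => H; apply: Hab; right; rewrite inE.
  have ac : a != c.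
    apply/eqP => Hac; have bc : b != c by rewrite -Hac eq_sym.
    by move: nab; rewrite Hac Hc.
  have bc : b != c.
    apply/eqP => Hbc; have acc : a != c by rewrite -Hbc.
    by move: nab; rewrite Hbc esym Hc.
  have [x [xc xv ev0x]] : exists x, [/\ x != c, x != v0 & ~~ e v0 x].
    case: (boolP ((a != v0) && ~~ e v0 a)) => [/andP[H1 H2]|H]; first by exists a.
    exists b; rewrite negb_and !negbK in H; case/orP: H => [/eqP av|va].
      by rewrite -av; split => //; rewrite eq_sym.
    split => //.
      by apply/eqP => Hb; move: nab; rewrite esym Hb va.
    apply/negP => vb; move/negP: nab; apply.
    by apply: (tr a v0 b v0c) => //; rewrite esym.
  have [w /andP[v0w wc]] := nb v0.
  have [w' /andP[xw' w'c]] := nb x.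
  have wv0 : w != v0 by apply/eqP => H; rewrite H eirr in v0w.
  have w'x : w' != x by apply/eqP => H; rewrite H eirr in xw'.
  have wx : w != x by apply/eqP => H; rewrite -H v0w in ev0x.
  have w'v0 : w' != v0 by apply/eqP => H; rewrite -H esym xw' in ev0x.
  have v0x : v0 != x by rewrite eq_sym.
  have ww' : w != w'.
    apply/eqP => H; move/negP: ev0x; apply; apply: (tr v0 w x wc) => //.
    by rewrite H esym.
  pose K := N v0 :|: N x.
  pose B := [set w; w'].
  pose S := (I :\: K) :|: B.
  pose S2 := [set v0; x].
  have BK : B \subset K.
    by apply/subsetP => y; rewrite !inE => /orP[]/eqP->; rewrite ?v0w ?xw' ?orbT.
  have IK : #|I :&: K| <= 2.
    rewrite /K setIUr; apply: leq_trans (leq_card_setU _ _) _.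
    have H1 : #|I :&: N v0| <= 1 by apply: clique_indep => //; apply: Ncl.
    have H2 : #|I :&: N x| <= 1 by apply: clique_indep => //; apply: Ncl.
    exact: (leq_add H1 H2).
  have Hsw := @card_swap I K B 2 BK IK.
  rewrite /B cards2 ww' /= -/B -/S in Hsw.
  have ww'e : ~~ e w w'.
    apply/negP => Hww; move/negP: ev0x; apply.
    have v0w' : e v0 w' by apply: (tr v0 w w' wc) => //; rewrite eq_sym.
    by apply: (tr v0 w' x w'c) => //; rewrite esym.
  have key y z : y \in S -> z \in B -> y != z -> ~~ e y z.
    rewrite /S in_setU => /orP[yIK|yB] zB yz.
      move: yIK; rewrite !inE negb_or => /andP[/andP[nv0 nx] _].
      move: nv0 nx; rewrite !negb_or => /andP[yv0 v0y] /andP[yx xy].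
      move: zB; rewrite !inE => /orP[]/eqP->; apply/negP => Hy.
        by move/negP: v0y; apply; apply: (tr v0 w y wc) => //; rewrite 1?esym // eq_sym.
      by move/negP: xy; apply; apply: (tr x w' y w'c) => //; rewrite 1?esym // eq_sym.
    move: yB zB yz; rewrite !inE => /orP[]/eqP-> /orP[]/eqP->; rewrite ?eqxx //.
    by rewrite esym.
  have HS : Eindep E S.
    move=> y z yS zS yz; apply: nE.
    case: (boolP (z \in B)) => zB; first exact: key.
    case: (boolP (y \in B)) => yB; first by rewrite esym; apply: key; rewrite // eq_sym.
    have yI : y \in I by move: yS; rewrite /S in_setU (negbTE yB) orbF inE => /andP[].
    have zI : z \in I by move: zS; rewrite /S in_setU (negbTE zB) orbF inE => /andP[].
    exact: (indepP _ _ HI).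
  have nvx y z : y \in S2 -> z \in S2 -> y != z -> ~~ e y z.
    rewrite !inE => /orP[]/eqP-> /orP[]/eqP->; rewrite ?eqxx // => _.
    by rewrite esym.
  have F2 : far2 E S2.
    move=> y z yS zS yz; apply/ball2P => -[Hzy|[Hyz|[t [yt tz]]]].
    - by rewrite Hzy eqxx in yz.
    - by move/HE: Hyz => /=; apply/negP; apply: nvx.
    - have tc : t != c.
        apply/eqP => Htc; rewrite Htc in yt tz.
        move: yS zS yz; rewrite !inE => /orP[]/eqP Hy /orP[]/eqP Hz; subst.
        + by rewrite eqxx.
        + by rewrite yt in nvc.
        + by rewrite tz in ncv.
        + by rewrite eqxx.
      move/HE: yt => /= yt; move/HE: tz => /= tz.
      by move/negP: (nvx y z yS zS yz); apply; apply: (tr y t z tc).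
  have D : [disjoint S & S2].
    rewrite -setI_eq0; apply/eqP/setP => y; rewrite in_setI in_set0; apply/negP => /andP[yS yS2].
    have v0K : v0 \in K by rewrite !inE eqxx.
    have xK : x \in K by rewrite !inE eqxx orbT.
    move: yS2 yS; rewrite /S2 /S /B in_set2 in_setU in_setD in_set2.
    case/orP=> /eqP ->.
      rewrite v0K /= => /orP[]/eqP H; [by rewrite H eqxx in wv0 | by rewrite H eqxx in w'v0].
    rewrite xK /= => /orP[]/eqP H; [by rewrite H eqxx in wx | by rewrite H eqxx in w'x].
  have := UB V HS F2 D.
  have S2n : S2 != set0 by apply/set0Pn; exists v0; rewrite !inE eqxx.
  have cU : #|S :|: S2| = #|S| + 2.
    by rewrite cardsU (disjoint_setI0 D) cards0 /S2 cards2 v0x subn0.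
  rewrite S2n VT cardTD cU => Hub.
  apply: (arith2 Hsw _ Hub); rewrite -cU; exact: max_card.
case: (eqVneq u c) => [uc|uc].
  by apply: (b2 v); rewrite -uc // eq_sym.
case: (eqVneq v c) => [vc|vc].
  by apply: (b2 u); rewrite -vc.
pose S := (I :\: N u) :|: [set u; v].
have Hsw := @card_swap I (N u) [set u; v] 1.
have BK : [set u; v] \subset N u by apply/subsetP => y; rewrite !inE => /orP[]/eqP->; rewrite ?eqxx ?euv ?orbT.
have IK : #|I :&: N u| <= 1 by apply: clique_indep => //; apply: Ncl.
have {Hsw} Hsw := Hsw BK IK; rewrite cards2 uv /= in Hsw.
have key y : y \in I :\: N u -> ~~ e y u && ~~ e y v.
  rewrite !inE negb_or => /andP[/andP[yu nuy] yI].
  rewrite esym nuy /=; apply/negP => yv.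
  by move/negP: nuy; apply; apply: (tr u v y vc euv); rewrite 1?esym // eq_sym.
have HS : Eindep E S.
  move=> y z; rewrite /S !in_setU !in_set1 => Hy Hz yz.
  case/or3P: Hy => [yI|/eqP Hyu|/eqP Hyv]; case/or3P: Hz => [zI|/eqP Hzu|/eqP Hzv].
  - apply: nE; move: yI zI; rewrite !inE => /andP[_ yI] /andP[_ zI].
    exact: (indepP _ _ HI).
  - by apply: nE; rewrite Hzu; case/andP: (key y yI).
  - by apply: nE; rewrite Hzv; case/andP: (key y yI).
  - by apply: nE; rewrite Hyu esym; case/andP: (key z zI).
  - by rewrite Hyu Hzu eqxx in yz.
  - by rewrite Hyu Hzv.
  - by apply: nE; rewrite Hyv esym; case/andP: (key z zI).
  - by rewrite Hyv Hzu.
  - by rewrite Hyv Hzv eqxx in yz.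
have F2 : far2 E (set0 : {set T}) by move=> y z; rewrite inE.
have D0 : [disjoint S & (set0 : {set T})] by rewrite -setI_eq0 setI0.
have := UB V HS F2 D0.
rewrite eqxx setU0 VT cardTD /= => Hub.
rewrite -/S in Hsw; apply: (arith1 Hsw _ Hub); exact: max_card.
Qed.

End Dir2.

Theorem theorem5p1 (T : finType) (e : rel T) (esym : symmetric e)
    (eirr : irreflexive e) (hblock : block_graph e) (hdiam : diameter2 e) :
  chi_rho_critical e <-> (forall x : T, 2 <= deg e x).
Proof.
split; first exact: dir1.
exact: dir2.
Qed.
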